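(* Let $Z$ be a time-inhomogeneous Markov chain on $\{0,1,2,\dots\}$ which at step $t$ moves from $0$ to $0$ with probability $\alpha_{t0}$ and to $1$ with probability $1-\alpha_{t0}$, and from $i\ge1$ to $i-1$ with probability $\alpha_{ti}$ and to $i+1$ with probability $1-\alpha_{ti}$. Let $\hat Z$ be the time-homogeneous random walk on $\{0,1,2,\dots\}$ which moves from $0$ to $1$ with probability $1$ and from $i\ge1$ to $i-1$ with probability $p$ and to $i+1$ with probability $1-p$. Let $C=\{0\}$ and let $g^{(t)}_n$, $n\ge1$, be the distribution of the time of the first return to $0$ after time $t$ for $Z$ given $Z_t=0$, i.e. $g^{(t)}_n=\mathbb{P}\{Z_{t+1}\ne0,\dots,Z_{t+n-1}\ne0,Z_{t+n}=0\mid Z_t=0\}$. Assume that $p>1/2$ and $p(1-p)\ge(1-\alpha_{ti})\alpha_{sj}$ for all $t,s,i,j$. Let $f_n=\hat{\mathbb{P}}\{\hat Z_0=0,\hat Z_1\ne0,\dots,\hat Z_{n-1}\ne0,\hat Z_n=0\}$ (probability of first return to $0$ at time $n$ for $\hat Z$ started at $0$), and set $\hat g_1=1$, $\hat g_n=f_n/p$ for $n>1$. Then for all $t$ and $k$, \[G^{(t)}_k\le\hat G_k,\qquad\text{where } G^{(t)}_k=\sum_{m>k}g^{(t)}_m,\ \hat G_k=\sum_{m>k}\hat g_m.\] *)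

(* Defs.v *)
From mathcomp Require Import all_boot all_order all_algebra.
From mathcomp Require Import all_classical all_reals all_analysis.
Set Implicit Arguments. Unset Strict Implicit. Unset Printing Implicit Defensive.
Import Order.TTheory GRing.Theory Num.Theory.
Local Open Scope ring_scope.

Section Chain.
Variable R : realType.

Definition Ptr (alpha : nat -> nat -> R) (t i j : nat) : R :=
  if i == 0%N then
    (if j == 0%N then alpha t 0%N else if j == 1%N then 1 - alpha t 0%N else 0)
  else if j == i.-1 then alpha t i
  else if j == i.+1 then 1 - alpha t i
  else 0.

(* fp alpha m s i = P{Z_{s+1} <> 0, ..., Z_{s+m-1} <> 0, Z_{s+m} = 0 | Z_s = i}
   (m >= 1; fp _ 0 _ _ = 0), computed by the Markov property: the one-step
   successor j of i lies in {0, ..., i+1}. *)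
Fixpoint fp (alpha : nat -> nat -> R) (m s i : nat) {struct m} : R :=
  match m with
  | 0%N => 0
  | m'.+1 => \sum_(j < i.+2)
      Ptr alpha s i j * (if (j : nat) == 0%N then (m' == 0%N)%:R else fp alpha m' s.+1 j)
  end.

Definition gret (alpha : nat -> nat -> R) (t n : nat) : R := fp alpha n t 0.

Definition alpha_hat (p : R) : nat -> nat -> R :=
  fun _ i => if i == 0%N then 0 else p.

Definition fhat (p : R) (n : nat) : R := gret (alpha_hat p) 0 n.

Definition ghat (p : R) (n : nat) : R :=
  if n == 0%N then 0 else if n == 1%N then 1 else fhat p n / p.

End Chain.

(* Main.v *)
Require Import Defs.
From mathcomp Require Import all_boot all_order all_algebra.
From mathcomp Require Import all_classical all_reals all_analysis.
Import Order.TTheory GRing.Theory Num.Theory.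
Local Open Scope ring_scope.
From mathcomp Require Import ring lra.

Section Aux.
Variable R : realType.

Lemma fp_succ0 (alpha : nat -> nat -> R) m s :
  fp alpha m.+1 s 0 = alpha s 0%N * (m == 0%N)%:R + (1 - alpha s 0%N) * fp alpha m s.+1 1.
Proof.
by rewrite /= !big_ord_recr big_ord0 /= /Ptr /= add0r.
Qed.

Lemma fp_succS (alpha : nat -> nat -> R) m s i :
  fp alpha m.+1 s i.+1 =
  alpha s i.+1 * (if i == 0%N then (m == 0%N)%:R else fp alpha m s.+1 i)
  + (1 - alpha s i.+1) * fp alpha m s.+1 i.+2.
Proof.
rewrite /= !big_ord_recr /=.
rewrite big1 ?add0r; last first.
  move=> j _; rewrite /Ptr /=.
  have hj := ltn_ord j.
  rewrite (ltn_eqF hj) ifF ?mul0r //.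
  by apply: ltn_eqF; apply: (ltn_trans hj); rewrite ltnS leqnSn.
rewrite /Ptr /= !eqxx.
rewrite (gtn_eqF (ltnSn i)) (ltn_eqF (ltnSn i.+1)) (@gtn_eqF i i.+2) //.
by rewrite mul0r addr0.
Qed.

Lemma fp_ge0 (alpha : nat -> nat -> R) (ha : forall t i, 0 <= alpha t i <= 1) m s i :
  0 <= fp alpha m s i.
Proof.
elim: m s i => [//|m IH] s [|i].
  rewrite fp_succ0; have /andP[a0 a1] := ha s 0%N.
  by rewrite addr_ge0 // mulr_ge0 // ?subr_ge0.
rewrite fp_succS; have /andP[a0 a1] := ha s i.+1.
rewrite addr_ge0 // mulr_ge0 // ?subr_ge0 //.
by case: ifP.
Qed.

End Aux.

Theorem lemma2 (R : realType) (alpha : nat -> nat -> R) (p : R)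
  (halpha : forall t i, 0 <= alpha t i <= 1)
  (hp1 : p <= 1) (hp : 1 / 2 < p)
  (hcmp : forall t s i j, (1 - alpha t i) * alpha s j <= p * (1 - p)) :
  forall t k : nat,
    (\sum_(k.+1 <= m <oo) (gret alpha t m)%:E <=
     \sum_(k.+1 <= m <oo) (ghat p m)%:E)%E.
Proof.
have p0 : 0 < p by apply: lt_trans hp; rewrite divr_gt0.
have hah : forall t i, 0 <= alpha_hat p t i <= 1.
  by move=> t i; rewrite /alpha_hat; case: ifP => _; rewrite ?lexx ?ler01 // (ltW p0) hp1.
set E : set R := (fun x : R => exists s j, x = alpha s j).
have hsup : has_sup E.
  split; first by exists (alpha 0%N 0%N), 0%N, 0%N.
  by exists 1 => x [s [j ->]]; have /andP[] := halpha s j.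
set b := sup E.
have ab : forall s j, alpha s j <= b.
  by move=> s j; apply: sup_upper_bound => //; exists s, j.
have b0 : 0 <= b by apply: le_trans (ab 0%N 0%N); have /andP[] := halpha 0%N 0%N.
have b1 : b <= 1.
  apply: ge_sup; first by exists (alpha 0%N 0%N), 0%N, 0%N.
  by move=> x [s [j ->]]; have /andP[] := halpha s j.
have hb : forall s i, (1 - alpha s i) * b <= p * (1 - p).
  move=> s i; have /andP[a0 a1] := halpha s i.
  have [e0|ne0] := eqVneq (1 - alpha s i) 0.
    by rewrite e0 mul0r; apply: mulr_ge0; [exact: ltW | by rewrite subr_ge0].
  have pos : 0 < 1 - alpha s i by rewrite lt0r ne0 subr_ge0.
  rewrite mulrC -ler_pdivlMr //.
  apply: ge_sup; first by exists (alpha 0%N 0%N), 0%N, 0%N.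
  move=> x [s' [j ->]]; rewrite ler_pdivlMr // mulrC; exact: hcmp.
have inv : forall m s s' i, fp alpha m s i.+1 <= (b / p) ^+ i.+1 * fp (alpha_hat p) m s' i.+1.
  elim=> [|m IH] s s' i; first by rewrite /= mulr0.
  rewrite !fp_succS /alpha_hat /=.
  have /andP[a0 a1] := halpha s i.+1.
  have bp0 : 0 <= b / p by rewrite divr_ge0 // ltW.
  have pn0 : p != 0 by rewrite gt_eqF.
  rewrite mulrDr; apply: lerD.
    case: i IH a0 a1 => [|i] IH a0 a1 /=.
      have -> : (b / p) ^+ 1 * (p * (m == 0%N)%:R) = b * (m == 0%N)%:R by field.
      by apply: ler_wpM2r => //; case: (m == 0%N).
    have -> : (b / p) ^+ i.+2 * (p * fp (alpha_hat p) m s'.+1 i.+1) =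
       b * ((b / p) ^+ i.+1 * fp (alpha_hat p) m s'.+1 i.+1) by rewrite exprS; field.
    apply: ler_pM => //; first exact: fp_ge0.
  apply: le_trans (_ : (1 - alpha s i.+1) * ((b / p) ^+ i.+2 * fp (alpha_hat p) m s'.+1 i.+2) <= _).
    apply: ler_wpM2l; first by rewrite subr_ge0.
    exact: IH.
  have -> : (1 - alpha s i.+1) * ((b / p) ^+ i.+2 * fp (alpha_hat p) m s'.+1 i.+2) =
     (b / p) ^+ i.+1 * (((1 - alpha s i.+1) * b / p) * fp (alpha_hat p) m s'.+1 i.+2)
     by rewrite exprS; field.
  apply: ler_wpM2l; first exact: exprn_ge0.
  apply: ler_wpM2r; first exact: fp_ge0.
  by rewrite ler_pdivrMr // mulrC [X in _ <= X]mulrC [X in X <= _]mulrC hb.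
move=> t k; apply: lee_nneseries => [n _ _|n _].
  by rewrite lee_fin; apply: fp_ge0.
rewrite lee_fin /gret /ghat.
case: n => [|[|m]]; first by rewrite /= lexx.
  rewrite fp_succ0 /= mulr1 mulr0 addr0.
  by have /andP[] := halpha t 0%N.
have e : (m.+1 == 0%N)%:R = 0 :> R by [].
rewrite fp_succ0 e mulr0 add0r.
have -> : (if m.+2 == 0%N then 0 else if m.+2 == 1%N then 1 else fhat p m.+2 / p)
   = fp (alpha_hat p) m.+1 1 1 / p.
  by rewrite /= /fhat /gret fp_succ0 e mulr0 add0r /alpha_hat /= subr0 mul1r.
have /andP[a0 a1] := halpha t 0%N.
apply: le_trans (_ : (1 - alpha t 0%N) * ((b / p) ^+ 1 * fp (alpha_hat p) m.+1 1 1) <= _).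
  by apply: ler_wpM2l; [rewrite subr_ge0 | exact: (inv m.+1 t.+1 1%N 0%N)].
have h0 := @fp_ge0 R _ hah m.+1 1%N 1%N.
set h := fp _ _ _ _ in h0 *.
have pn0 : p != 0 by rewrite gt_eqF.
have -> : (1 - alpha t 0%N) * ((b / p) ^+ 1 * h) = ((1 - alpha t 0%N) * b) * (h / p)
  by rewrite expr1; field.
apply: ler_piMl; first by rewrite divr_ge0 // ltW.
apply: le_trans (_ : 1 * 1 <= 1); last by rewrite mul1r.
apply: ler_pM => //; first by rewrite subr_ge0.
by rewrite lerBlDr lerDl.
Qed.
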